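(* Let $0 < a < 1$. Then \[ (1-a)\left(\frac1{a} + \frac{\pi^2}{6} - 1\right) < \psi(1) - \psi(a) < (1-a)\left(\frac1{a} + 1\right). \]
   Context: $\psi=\Gamma'/\Gamma$ is the digamma function. *)

(* Defs.v *)
From Stdlib Require Import Reals.
From Coquelicot Require Import Coquelicot.
Open Scope R_scope.

Definition Gamma (x : R) : R :=
  RInt_gen (fun t => Rpower t (x - 1) * exp (- t)) (at_right 0) (Rbar_locally p_infty).

Definition digamma (x : R) : R := Derive Gamma x / Gamma x.

(* Main.v *)
Require Import Defs.
From Stdlib Require Import Reals.
From Coquelicot Require Import Coquelicot.
From Stdlib Require Import Lra Lia Classical.
Open Scope R_scope.

Definition aseq (n:nat) := / (INR n + 1).
Definition bseq (n:nat) := INR n + 1.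

Lemma aseq_pos n : 0 < aseq n.
Proof. unfold aseq. apply Rinv_0_lt_compat. pose proof (pos_INR n). lra. Qed.
Lemma bseq_ge1 n : 1 <= bseq n.
Proof. unfold bseq. pose proof (pos_INR n). lra. Qed.
Lemma aseq_le1 n : aseq n <= 1.
Proof. unfold aseq. pose proof (pos_INR n). rewrite <- Rinv_1. apply Rinv_le_contravar; lra. Qed.
Lemma aseq_le_bseq n : aseq n <= bseq n.
Proof. pose proof (aseq_le1 n); pose proof (bseq_ge1 n); lra. Qed.

Definition contpos (f : R -> R) := forall t, 0 < t -> continuous f t.

Lemma exR f a b : 0 < a -> 0 < b -> contpos f -> ex_RInt f a b.
Proof.
  intros Ha Hb Hf. apply (ex_RInt_continuous (V:=R_CompleteNormedModule)). intros z Hz. apply Hf.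
  destruct Hz as [Hz _]. unfold Rmin in Hz. destruct (Rle_dec a b); lra.
Qed.

Lemma ball_R (x e y : R) : Rabs (y - x) < e -> ball x e y.
Proof. intros H. exact H. Qed.

Lemma gen_nonneg f B : contpos f -> (forall t, 0 < t -> 0 <= f t) ->
  (forall a b, 0 < a -> a <= b -> RInt f a b <= B) ->
  exists l, is_RInt_gen f (at_right 0) (Rbar_locally p_infty) l.
Proof.
  intros Hc Hpos HB.
  set (E := fun v => exists a b, 0 < a /\ a <= b /\ v = RInt f a b).
  assert (Hb : bound E). { exists B. intros v [a [b [Ha [Hab ->]]]]. apply HB; lra. }
  assert (He : exists v, E v). { exists (RInt f 1 1). exists 1, 1. repeat split; lra. }
  destruct (completeness E Hb He) as [m [Hub Hlub]].
  assert (mono : forall a b a0 b0, 0 < a -> a <= a0 -> a0 <= b0 -> b0 <= b ->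
     RInt f a0 b0 <= RInt f a b).
  { intros a b a0 b0 Ha H1 H2 H3.
    rewrite <- (RInt_Chasles f a a0 b) by (apply exR; auto; lra).
    rewrite <- (RInt_Chasles f a0 b0 b) by (apply exR; auto; lra).
    assert (0 <= RInt f a a0) by (apply RInt_ge_0; [lra| apply exR; auto; lra | intros; apply Hpos; lra]).
    assert (0 <= RInt f b0 b) by (apply RInt_ge_0; [lra| apply exR; auto; lra | intros; apply Hpos; lra]).
    change plus with Rplus. simpl. lra. }
  exists m. intros P [eps Heps].
  assert (Hex : exists a0 b0, 0 < a0 /\ a0 <= b0 /\ m - eps < RInt f a0 b0).
  { apply NNPP. intros Hn. assert (is_upper_bound E (m - eps)).
    { intros v [a [b [Ha [Hab ->]]]]. apply Rnot_lt_le. intros Hl. apply Hn.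
      exists a, b. repeat split; auto. }
    specialize (Hlub _ H). destruct eps; simpl in *; lra. }
  destruct Hex as [a0 [b0 [Ha0 [Hab0 Hm]]]].
  apply Filter_prod with (fun a => 0 < a <= a0) (fun b => b0 <= b).
  - exists (mkposreal a0 Ha0). intros y Hy Hy0. simpl in *.
    unfold ball in Hy; simpl in Hy; unfold AbsRing_ball, abs, minus, plus, opp in Hy; simpl in Hy.
    apply Rabs_lt_between in Hy. lra.
  - exists b0. intros; lra.
  - intros a b [Ha1 Ha2] Hb0. simpl. exists (RInt f a b). split.
    + apply (RInt_correct (V:=R_CompleteNormedModule)), exR; auto; lra.
    + apply Heps. apply ball_R.
      assert (RInt f a b <= m). { apply Hub. exists a, b. repeat split; lra. }
      pose proof (mono a b a0 b0 Ha1 Ha2 Hab0 Hb0).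
      apply Rabs_lt_between. destruct eps; simpl in *; lra.
Qed.

Lemma gen_seq f l : contpos f ->
  is_RInt_gen f (at_right 0) (Rbar_locally p_infty) l ->
  is_lim_seq (fun n => @RInt R_CompleteNormedModule f (aseq n) (bseq n)) l.
Proof.
  intros Hc H. apply is_lim_seq_Reals. intros eps Heps.
  specialize (H (ball l (mkposreal eps Heps)) (locally_ball l (mkposreal eps Heps))).
  destruct H as [P Q [d Hd] [M HM] HPQ].
  destruct (INR_archimed 1 (Rmax M (/ d)) Rlt_0_1) as [N HN].
  rewrite Rmult_1_r in HN.
  exists N. intros n Hn.
  assert (HnN : INR N <= INR n) by (apply le_INR; lia).
  assert (Hd0 : 0 < d) by apply cond_pos.
  assert (HP : P (aseq n)).
  { apply Hd.
    - unfold ball; simpl; unfold AbsRing_ball, abs, minus, plus, opp; simpl.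
      pose proof (aseq_pos n). rewrite Ropp_0, Rplus_0_r, Rabs_pos_eq by lra.
      unfold aseq. rewrite <- (Rinv_inv d). apply Rinv_lt_contravar.
      + apply Rmult_lt_0_compat. apply Rinv_0_lt_compat; lra. pose proof (pos_INR n); lra.
      + pose proof (Rmax_r M (/d)). lra.
    - apply aseq_pos. }
  assert (HQ : Q (bseq n)). { apply HM. unfold bseq. pose proof (Rmax_l M (/d)). lra. }
  destruct (HPQ _ _ HP HQ) as [y [Hy Hb]]. simpl in Hy.
  rewrite (is_RInt_unique (V:=R_CompleteNormedModule) _ _ _ _ Hy). exact Hb.
Qed.

Lemma gen_unique f l : is_RInt_gen f (at_right 0) (Rbar_locally p_infty) l ->
  @RInt_gen R_CompleteNormedModule f (at_right 0) (Rbar_locally p_infty) = l.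
Proof. intros H. apply is_RInt_gen_unique; auto. Qed.

Lemma RI_mono f a b a0 b0 : contpos f -> (forall t, 0 < t -> 0 <= f t) ->
  0 < a -> a <= a0 -> a0 <= b0 -> b0 <= b ->
  @RInt R_CompleteNormedModule f a0 b0 <= RInt f a b.
Proof.
  intros Hc Hpos Ha H1 H2 H3.
  rewrite <- (RInt_Chasles f a a0 b) by (apply exR; auto; lra).
  rewrite <- (RInt_Chasles f a0 b0 b) by (apply exR; auto; lra).
  assert (0 <= RInt f a a0) by (apply RInt_ge_0; [lra| apply exR; auto; lra | intros; apply Hpos; lra]).
  assert (0 <= RInt f b0 b) by (apply RInt_ge_0; [lra| apply exR; auto; lra | intros; apply Hpos; lra]).
  change plus with Rplus. simpl. lra.
Qed.

Lemma exp_sm1 s t : 0 < t -> exp ((s-1) * ln t) = exp (s * ln t) / t.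
Proof.
  intros Ht. replace ((s-1)*ln t) with (s * ln t + - ln t) by ring.
  rewrite exp_plus, exp_Ropp, exp_ln by auto. reflexivity.
Qed.

Lemma RI_pow s a : 0 < s -> 0 < a ->
  @RInt R_CompleteNormedModule (fun t => exp ((s-1) * ln t)) a 1 = (1 - exp (s * ln a)) / s.
Proof.
  intros Hs Ha.
  assert (H : is_RInt (fun t => exp ((s-1) * ln t)) a 1
      (minus ((fun t => exp (s * ln t) / s) 1) ((fun t => exp (s * ln t) / s) a))).
  { apply (is_RInt_derive (V:=R_CompleteNormedModule) (fun t => exp (s * ln t) / s)).
    - intros x Hx. assert (0 < x). { destruct Hx as [Hx _]. unfold Rmin in Hx. destruct (Rle_dec a 1); lra. }
      auto_derive; [lra|]. rewrite exp_sm1 by lra. field. split; lra.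
    - intros x Hx. assert (0 < x). { destruct Hx as [Hx _]. unfold Rmin in Hx. destruct (Rle_dec a 1); lra. }
      apply (ex_derive_continuous (K:=R_AbsRing) (V:=R_NormedModule)). auto_derive. lra. }
  rewrite (is_RInt_unique _ _ _ _ H). unfold minus, plus, opp; simpl. rewrite ln_1, Rmult_0_r, exp_0. field. lra.
Qed.

Lemma RI_expm (b : R) : @RInt R_CompleteNormedModule (fun t => exp (- t / 2)) 1 b = 2 * exp (- 1 / 2) - 2 * exp (- b / 2).
Proof.
  assert (H : is_RInt (fun t => exp (- t / 2)) 1 b
      (minus ((fun t => -2 * exp (- t / 2)) b) ((fun t => -2 * exp (- t / 2)) 1))).
  { apply (is_RInt_derive (V:=R_CompleteNormedModule) (fun t => -2 * exp (- t / 2))).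
    - intros x Hx. auto_derive; [easy|]. unfold Rdiv. field.
    - intros x Hx. apply (ex_derive_continuous (K:=R_AbsRing) (V:=R_NormedModule)). auto_derive. easy. }
  rewrite (is_RInt_unique _ _ _ _ H). unfold minus, plus, opp; simpl. replace (- (1) / 2) with (-1/2) by field. ring.
Qed.

Definition dominated (f : R -> R) (C s : R) :=
  0 < s /\ 0 <= C /\ contpos f /\
  (forall t, 0 < t <= 1 -> Rabs (f t) <= C * exp ((s-1) * ln t)) /\
  (forall t, 1 <= t -> Rabs (f t) <= C * exp (- t / 2)).

Lemma contpos_abs f : contpos f -> contpos (fun t => Rabs (f t)).
Proof. intros H t Ht. apply continuous_Rabs_comp. auto. Qed.

Lemma dom_abs_bound f C s : dominated f C s -> forall a b, 0 < a -> a <= b ->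
  @RInt R_CompleteNormedModule (fun t => Rabs (f t)) a b <= C * (/ s + 2).
Proof.
  intros [Hs [HC [Hc [H1 H2]]]] a b Ha Hab.
  set (a' := Rmin a 1). set (b' := Rmax b 1).
  assert (Ha' : 0 < a' <= 1) by (unfold a', Rmin; destruct (Rle_dec a 1); lra).
  assert (Hb' : 1 <= b') by (unfold b', Rmax; destruct (Rle_dec b 1); lra).
  assert (Haa : a' <= a) by apply Rmin_l. assert (Hbb : b <= b') by apply Rmax_l.
  pose proof (contpos_abs f Hc) as Hca.
  eapply Rle_trans. apply (RI_mono _ a' b' a b Hca); auto; try lra. intros; apply Rabs_pos.
  rewrite <- (RInt_Chasles _ a' 1 b') by (apply exR; auto; lra).
  change plus with Rplus; simpl.
  assert (E1 : @RInt R_CompleteNormedModule (fun t => Rabs (f t)) a' 1 <= C / s).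
  { eapply Rle_trans. apply (RInt_le _ (fun t => C * exp ((s-1) * ln t))). lra.
    apply exR; auto; lra.
    apply exR; try lra. intros t Ht. apply (ex_derive_continuous (K:=R_AbsRing) (V:=R_NormedModule)). auto_derive. lra.
    intros t Ht. apply H1. lra.
    rewrite (RInt_scal (V:=R_CompleteNormedModule) (fun t => exp ((s-1) * ln t))).
    rewrite RI_pow by lra. unfold scal; simpl; unfold mult; simpl.
    pose proof (exp_pos (s * ln a')). unfold Rdiv. apply Rmult_le_compat_l; auto.
    assert (0 < /s) by (apply Rinv_0_lt_compat; lra). nra.
    apply exR; try lra. intros t Ht. apply (ex_derive_continuous (K:=R_AbsRing) (V:=R_NormedModule)). auto_derive. lra. }
  assert (E2 : @RInt R_CompleteNormedModule (fun t => Rabs (f t)) 1 b' <= 2 * C).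
  { eapply Rle_trans. apply (RInt_le _ (fun t => C * exp (- t / 2))). lra.
    apply exR; auto; lra.
    apply exR; try lra. intros t Ht. apply (ex_derive_continuous (K:=R_AbsRing) (V:=R_NormedModule)). auto_derive. easy.
    intros t Ht. apply H2. lra.
    rewrite (RInt_scal (V:=R_CompleteNormedModule) (fun t => exp (- t / 2))).
    rewrite RI_expm. unfold scal; simpl; unfold mult; simpl.
    pose proof (exp_pos (- b' / 2)).
    assert (exp (-1/2) <= 1). { rewrite <- exp_0. left; apply exp_increasing; lra. }
    nra.
    apply exR; try lra. intros t Ht. apply (ex_derive_continuous (K:=R_AbsRing) (V:=R_NormedModule)). auto_derive. easy. }
  unfold Rdiv in E1. lra.
Qed.

Lemma dom_RI_bound f C s : dominated f C s -> forall a b, 0 < a -> a <= b ->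
  Rabs (@RInt R_CompleteNormedModule f a b) <= C * (/ s + 2).
Proof.
  intros Hd a b Ha Hab. eapply Rle_trans. apply abs_RInt_le; auto.
  apply exR; try lra. apply Hd. apply dom_abs_bound; auto.
Qed.

Lemma contpos_plus f g : contpos f -> contpos g -> contpos (fun t => f t + g t).
Proof. intros Hf Hg t Ht. apply (continuous_plus f g); auto. Qed.

Lemma dom_gen f C s : dominated f C s ->
  exists l, is_RInt_gen f (at_right 0) (Rbar_locally p_infty) l.
Proof.
  intros Hd. pose proof Hd as [Hs [HC [Hc [H1 H2]]]].
  set (g := fun t => f t + Rabs (f t)).
  assert (Hgd : dominated g (2*C) s).
  { split; [lra|split;[lra|split]].
    - apply contpos_plus; auto. apply contpos_abs; auto.
    - split; intros t Ht; unfold g.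
      + specialize (H1 t Ht). eapply Rle_trans. apply Rabs_triang. rewrite Rabs_Rabsolu. lra.
      + specialize (H2 t Ht). eapply Rle_trans. apply Rabs_triang. rewrite Rabs_Rabsolu. lra. }
  destruct (gen_nonneg g (2*C*(/s+2))) as [l1 Hl1].
  { apply Hgd. }
  { intros t _. unfold g. pose proof (Rabs_maj2 (f t)). lra. }
  { intros a b Ha Hab. pose proof (dom_RI_bound g _ _ Hgd a b Ha Hab).
    pose proof (Rle_abs (@RInt R_CompleteNormedModule g a b)). lra. }
  destruct (gen_nonneg (fun t => Rabs (f t)) (C*(/s+2))) as [l2 Hl2].
  { apply contpos_abs; auto. }
  { intros; apply Rabs_pos. }
  { intros a b Ha Hab. apply (dom_abs_bound f C s Hd); auto. }
  exists (minus l1 l2).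
  pose proof (is_RInt_gen_minus _ _ _ _ Hl1 Hl2) as H.
  eapply is_RInt_gen_ext; [| exact H].
  apply filter_forall. intros ab x _. unfold g, minus, plus, opp; simpl. ring.
Qed.

Lemma ln_le_sub1 z : 0 < z -> ln z <= z - 1.
Proof. intros Hz. pose proof (exp_ineq1_le (ln z)). rewrite exp_ln in H by auto. lra. Qed.

Lemma exp_le_exp' a b : a <= b -> exp a <= exp b.
Proof. intros [H|H]. left; apply exp_increasing; auto. subst; lra. Qed.

Definition Kp (p : R) := exp ((Rabs p + 1) * ln (2 * (Rabs p + 1))).

Lemma Kp_pos p : 0 < Kp p.
Proof. apply exp_pos. Qed.

Lemma Kp_bound p t : 1 <= t -> exp (p * ln t) * exp (- t) <= Kp p * exp (- t / 2).
Proof.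
  intros Ht. unfold Kp. set (q := Rabs p + 1).
  assert (Hq : 1 <= q) by (unfold q; pose proof (Rabs_pos p); lra).
  assert (Hl : 0 <= ln t) by (rewrite <- ln_1; apply ln_le; lra).
  assert (H1 : p * ln t <= q * ln t).
  { apply Rmult_le_compat_r; auto. unfold q. pose proof (Rle_abs p). lra. }
  assert (H2 : ln t = ln (t / (2*q)) + ln (2*q)).
  { rewrite <- ln_mult. f_equal. field. lra. apply Rdiv_lt_0_compat; lra. lra. }
  assert (H3 : ln (t / (2*q)) <= t / (2*q) - 1) by (apply ln_le_sub1; apply Rdiv_lt_0_compat; lra).
  assert (H4 : q * ln t <= t / 2 - q + q * ln (2*q)).
  { rewrite H2. replace (t/2) with (q * (t / (2*q))) by (field; lra).
    assert (q * ln (t / (2 * q)) <= q * (t / (2*q) - 1)) by (apply Rmult_le_compat_l; lra). lra. }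
  rewrite <- !exp_plus. apply exp_le_exp'. lra.
Qed.


Lemma ln_small t eps : 0 < t <= 1 -> 0 < eps -> - ln t <= exp (- eps * ln t) / eps.
Proof.
  intros Ht He. pose proof (exp_ineq1_le (- eps * ln t)).
  apply (Rmult_le_reg_l eps); auto. replace (eps * (exp (- eps * ln t) / eps)) with (exp (- eps * ln t)) by (field; lra).
  assert (ln t <= 0) by (rewrite <- ln_1; apply ln_le; lra). nra.
Qed.

Lemma ln_big t : 1 <= t -> 0 <= ln t <= exp (ln t).
Proof.
  intros Ht. rewrite exp_ln by lra. split. rewrite <- ln_1; apply ln_le; lra.
  pose proof (ln_le_sub1 t). lra.
Qed.

Lemma expm1_bound u : Rabs (exp u - 1 - u) <= u ^ 2 * exp (Rabs u).
Proof.
  pose proof (exp_ineq1_le u) as Ha. pose proof (exp_ineq1_le (- u)) as Hb.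
  assert (Hab : exp u * exp (- u) = 1) by (rewrite <- exp_plus; replace (u + - u) with 0 by ring; apply exp_0).
  pose proof (exp_pos u). pose proof (exp_pos (-u)).
  rewrite Rabs_pos_eq by lra.
  destruct (Rle_dec 0 u) as [Hu|Hu].
  - rewrite Rabs_pos_eq by lra.
    assert (exp u * (1 - u) <= exp u * exp (- u)) by (apply Rmult_le_compat_l; lra).
    assert (exp u - 1 <= u * exp u) by nra.
    assert (u * (exp u - 1) <= u * (u * exp u)) by (apply Rmult_le_compat_l; lra).
    nra.
  - rewrite Rabs_left by lra.
    assert (exp u * (1 - u) <= exp u * exp (- u)) by (apply Rmult_le_compat_l; lra).
    assert (1 - exp u <= - u) by lra.
    assert (exp u - 1 - u <= - u * (1 - exp u)) by nra.
    assert (- u * (1 - exp u) <= - u * - u) by (apply Rmult_le_compat_l; lra).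
    assert (1 <= exp (- u)) by lra.
    assert (u^2 * 1 <= u^2 * exp (-u)) by (apply Rmult_le_compat_l; nra).
    nra.
Qed.

Definition gi (x t : R) := Rpower t (x - 1) * exp (- t).
Definition gl (x t : R) := exp ((x - 1) * ln t) * ln t * exp (- t).
Definition Eh (x h t : R) := gi (x + h) t - gi x t - h * gl x t.

Lemma contpos_gi x : contpos (gi x).
Proof. intros t Ht. unfold gi, Rpower. apply (ex_derive_continuous (K:=R_AbsRing) (V:=R_NormedModule)). auto_derive. lra. Qed.
Lemma contpos_gl x : contpos (gl x).
Proof. intros t Ht. unfold gl. apply (ex_derive_continuous (K:=R_AbsRing) (V:=R_NormedModule)). auto_derive. lra. Qed.
Lemma contpos_Eh x h : contpos (Eh x h).
Proof. intros t Ht. unfold Eh, gi, gl, Rpower. apply (ex_derive_continuous (K:=R_AbsRing) (V:=R_NormedModule)). auto_derive. repeat split; lra. Qed.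

Lemma expt_le1 t : 0 <= t -> exp (- t) <= 1.
Proof. intros. rewrite <- exp_0. apply exp_le_exp'. lra. Qed.

Lemma dom_gi x : 0 < x -> dominated (gi x) (1 + Kp (x - 1)) x.
Proof.
  intros Hx. pose proof (Kp_pos (x-1)).
  split; [lra|split;[lra|split;[apply contpos_gi|split]]]; intros t Ht; unfold gi, Rpower;
  pose proof (exp_pos ((x-1) * ln t)); pose proof (exp_pos (-t));
  rewrite Rabs_pos_eq by (apply Rmult_le_pos; lra).
  - pose proof (expt_le1 t). nra.
  - pose proof (Kp_bound (x-1) t Ht). pose proof (exp_pos (-t/2)). nra.
Qed.

Lemma dom_gl x : 0 < x -> dominated (gl x) (2 / x + Kp x) (x / 2).
Proof.
  intros Hx. pose proof (Kp_pos x). assert (0 < 2 / x) by (apply Rdiv_lt_0_compat; lra).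
  split; [lra|split;[lra|split;[apply contpos_gl|split]]]; intros t Ht; unfold gl;
  pose proof (exp_pos ((x-1) * ln t)) as HA; pose proof (exp_pos (-t)) as HE;
  rewrite !Rabs_mult, (Rabs_pos_eq (exp _)) by lra; rewrite (Rabs_pos_eq (exp (-t))) by lra.
  - assert (Hl : ln t <= 0) by (rewrite <- ln_1; apply ln_le; lra).
    rewrite Rabs_left1 by lra.
    pose proof (ln_small t (x/2) Ht ltac:(lra)) as HL.
    pose proof (expt_le1 t ltac:(lra)).
    assert (E : exp ((x - 1) * ln t) * (exp (- (x / 2) * ln t) / (x / 2)) = 2 / x * exp ((x / 2 - 1) * ln t)).
    { replace (exp ((x - 1) * ln t) * (exp (- (x / 2) * ln t) / (x / 2))) with ((2/x) * (exp ((x - 1) * ln t) * exp (- (x / 2) * ln t))) by (field; lra).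
      rewrite <- exp_plus. assert (Hc : (x-1)*ln t + - (x/2) * ln t = (x/2-1)*ln t) by field. rewrite Hc. reflexivity. }
    assert (exp ((x - 1) * ln t) * - ln t <= exp ((x - 1) * ln t) * (exp (- (x / 2) * ln t) / (x / 2))) by (apply Rmult_le_compat_l; lra).
    pose proof (exp_pos ((x / 2 - 1) * ln t)).
    assert (0 <= exp ((x - 1) * ln t) * - ln t) by nra.
    nra.
  - destruct (ln_big t Ht) as [Hl1 Hl2]. rewrite Rabs_pos_eq by lra.
    assert (exp ((x - 1) * ln t) * ln t <= exp ((x - 1) * ln t) * exp (ln t)) by (apply Rmult_le_compat_l; lra).
    rewrite <- exp_plus in H1. replace ((x - 1) * ln t + ln t) with (x * ln t) in H1 by ring.
    pose proof (Kp_bound x t Ht). pose proof (exp_pos (-t/2)).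
    assert (exp ((x - 1) * ln t) * ln t * exp (- t) <= exp (x * ln t) * exp (- t)) by (apply Rmult_le_compat_r; lra).
    nra.
Qed.

Lemma Eh_eq x h t : Eh x h t = exp ((x-1) * ln t) * exp (- t) * (exp (h * ln t) - 1 - h * ln t).
Proof.
  unfold Eh, gi, gl, Rpower. replace ((x + h - 1) * ln t) with ((x-1) * ln t + h * ln t) by ring.
  rewrite exp_plus. ring.
Qed.

Lemma sq_exp a : exp a ^ 2 = exp (2 * a).
Proof. simpl. rewrite Rmult_1_r, <- exp_plus. f_equal. ring. Qed.

Lemma dom_Eh x h : 0 < x -> Rabs h <= x / 4 ->
  dominated (Eh x h) (h ^ 2 * (64 / x ^ 2 + Kp (x + 1 + x / 4))) (x / 2).
Proof.
  intros Hx Hh. pose proof (Kp_pos (x + 1 + x/4)) as HK.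
  assert (H64 : 0 < 64 / x ^ 2) by (apply Rdiv_lt_0_compat; [lra| apply pow_lt; lra]).
  assert (Hh2 : 0 <= h ^ 2) by (apply pow2_ge_0).
  assert (Hah : 0 <= Rabs h) by apply Rabs_pos.
  split; [lra|split;[apply Rmult_le_pos; lra|split;[apply contpos_Eh|split]]]; intros t Ht;
  rewrite Eh_eq; set (A := exp ((x-1) * ln t)); set (E := exp (- t)); set (u := h * ln t);
  assert (HA : 0 < A) by apply exp_pos; assert (HE : 0 < E) by apply exp_pos;
  rewrite Rabs_mult, (Rabs_pos_eq (A * E)) by (apply Rmult_le_pos; lra);
  pose proof (expm1_bound u) as Hu;
  assert (H1 : A * E * Rabs (exp u - 1 - u) <= A * E * (u ^ 2 * exp (Rabs u))) by (apply Rmult_le_compat_l; [apply Rmult_le_pos|]; lra).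
  - assert (Hl : ln t <= 0) by (rewrite <- ln_1; apply ln_le; lra).
    pose proof (ln_small t (x/8) Ht ltac:(lra)) as HL.
    assert (HL2 : ln t ^ 2 <= 64 / x ^ 2 * exp (- (x / 4) * ln t)).
    { assert (0 <= - ln t) by lra.
      assert (ln t ^ 2 <= (exp (- (x / 8) * ln t) / (x / 8)) ^ 2).
      { replace (ln t ^ 2) with ((- ln t) ^ 2) by ring. apply pow_incr. lra. }
      replace ((exp (- (x / 8) * ln t) / (x / 8)) ^ 2) with (64 / x ^ 2 * exp (- (x / 8) * ln t) ^ 2) in H0 by (field; lra).
      rewrite sq_exp in H0. replace (2 * (- (x / 8) * ln t)) with (- (x / 4) * ln t) in H0 by field. exact H0. }
    assert (Hua : Rabs u <= - (x / 4) * ln t).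
    { unfold u. rewrite Rabs_mult, (Rabs_left1 (ln t)) by lra.
      replace (- (x / 4) * ln t) with (x / 4 * - ln t) by field. apply Rmult_le_compat_r; lra. }
    assert (Heu : exp (Rabs u) <= exp (- (x / 4) * ln t)) by (apply exp_le_exp'; auto).
    assert (Hu2 : u ^ 2 = h ^ 2 * ln t ^ 2) by (unfold u; ring).
    assert (HE1 : E <= 1) by (apply expt_le1; lra).
    set (B := exp (- (x / 4) * ln t)). assert (HB : 0 < B) by apply exp_pos.
    assert (Hfin : A * B * B = exp ((x / 2 - 1) * ln t)).
    { unfold A, B. rewrite <- !exp_plus. f_equal. field. }
    assert (0 <= exp (Rabs u)) by (left; apply exp_pos).
    assert (0 <= ln t ^ 2) by apply pow2_ge_0.
    assert (S1 : u ^ 2 * exp (Rabs u) <= h ^ 2 * (64 / x ^ 2 * B) * B).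
    { rewrite Hu2. unfold B. apply Rmult_le_compat; try apply Rmult_le_pos; try lra. apply Rmult_le_compat_l; lra. }
    assert (S2 : A * E * (u ^ 2 * exp (Rabs u)) <= A * 1 * (h ^ 2 * (64 / x ^ 2 * B) * B)).
    { apply Rmult_le_compat. apply Rmult_le_pos; lra. apply Rmult_le_pos; [apply pow2_ge_0 | lra]. apply Rmult_le_compat_l; lra. exact S1. }
    replace (A * 1 * (h ^ 2 * (64 / x ^ 2 * B) * B)) with (h ^ 2 * (64 / x ^ 2) * (A * B * B)) in S2 by ring.
    rewrite Hfin in S2. pose proof (exp_pos ((x / 2 - 1) * ln t)).
    assert (h ^ 2 * (64 / x ^ 2) <= h ^ 2 * (64 / x ^ 2 + Kp (x + 1 + x / 4))) by (apply Rmult_le_compat_l; lra).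
    nra.
  - destruct (ln_big t Ht) as [Hl1 Hl2].
    assert (HL2 : ln t ^ 2 <= exp (2 * ln t)).
    { rewrite <- sq_exp. apply pow_incr. lra. }
    assert (Hua : Rabs u <= x / 4 * ln t).
    { unfold u. rewrite Rabs_mult, (Rabs_pos_eq (ln t)) by lra. apply Rmult_le_compat_r; lra. }
    assert (Heu : exp (Rabs u) <= exp (x / 4 * ln t)) by (apply exp_le_exp'; auto).
    assert (Hu2 : u ^ 2 = h ^ 2 * ln t ^ 2) by (unfold u; ring).
    assert (0 <= exp (Rabs u)) by (left; apply exp_pos).
    assert (0 <= ln t ^ 2) by apply pow2_ge_0.
    assert (S1 : u ^ 2 * exp (Rabs u) <= h ^ 2 * exp (2 * ln t) * exp (x / 4 * ln t)).
    { rewrite Hu2. apply Rmult_le_compat; try apply Rmult_le_pos; try lra. apply Rmult_le_compat_l; lra. }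
    assert (S2 : A * E * (u ^ 2 * exp (Rabs u)) <= A * E * (h ^ 2 * exp (2 * ln t) * exp (x / 4 * ln t))).
    { apply Rmult_le_compat_l; try apply Rmult_le_pos; lra. }
    assert (Hfin : A * exp (2 * ln t) * exp (x / 4 * ln t) = exp ((x + 1 + x / 4) * ln t)).
    { unfold A. rewrite <- !exp_plus. f_equal. field. }
    replace (A * E * (h ^ 2 * exp (2 * ln t) * exp (x / 4 * ln t))) with (h ^ 2 * (A * exp (2 * ln t) * exp (x / 4 * ln t) * E)) in S2 by ring.
    rewrite Hfin in S2. pose proof (Kp_bound (x + 1 + x / 4) t Ht) as HKb. fold E in HKb.
    pose proof (exp_pos (- t / 2)).
    assert (h ^ 2 * (exp ((x + 1 + x / 4) * ln t) * E) <= h ^ 2 * (Kp (x + 1 + x / 4) * exp (- t / 2))) by (apply Rmult_le_compat_l; lra).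
    assert (h ^ 2 * Kp (x + 1 + x / 4) <= h ^ 2 * (64 / x ^ 2 + Kp (x + 1 + x / 4))) by (apply Rmult_le_compat_l; lra).
    nra.
Qed.

Notation RI := (@RInt R_CompleteNormedModule).

Lemma lim_uniq u (l1 l2 : R) : is_lim_seq u l1 -> is_lim_seq u l2 -> l1 = l2.
Proof.
  intros H1 H2. apply is_lim_seq_unique in H1. apply is_lim_seq_unique in H2.
  rewrite H1 in H2. now inversion H2.
Qed.

Lemma lim_le u v (l1 l2 : R) : is_lim_seq u l1 -> is_lim_seq v l2 -> (forall n, u n <= v n) -> l1 <= l2.
Proof. intros H1 H2 H. pose proof (is_lim_seq_le u v l1 l2 H H1 H2). exact H0. Qed.

Lemma lim0 u : (forall eps, 0 < eps -> exists M, forall n, M <= INR n -> Rabs (u n) < eps) ->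
  is_lim_seq u 0.
Proof.
  intros H. apply is_lim_seq_Reals. intros eps Heps. destruct (H eps Heps) as [M HM].
  destruct (INR_archimed 1 M Rlt_0_1) as [N HN]. rewrite Rmult_1_r in HN.
  exists N. intros n Hn. unfold R_dist. rewrite Rminus_0_r. apply HM.
  assert (INR N <= INR n) by (apply le_INR; lia). lra.
Qed.

Lemma Gamma_gen x : 0 < x -> is_RInt_gen (gi x) (at_right 0) (Rbar_locally p_infty) (Gamma x).
Proof.
  intros Hx. destruct (dom_gen _ _ _ (dom_gi x Hx)) as [l Hl].
  assert (E : Gamma x = l).
  { unfold Gamma. change (fun t => Rpower t (x - 1) * exp (- t)) with (gi x). apply gen_unique; exact Hl. } rewrite E. exact Hl.
Qed.

Lemma Gamma_lim x : 0 < x -> is_lim_seq (fun n => RI (gi x) (aseq n) (bseq n)) (Gamma x).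
Proof. intros Hx. apply gen_seq. apply contpos_gi. apply Gamma_gen; auto. Qed.

Lemma gi_pos x t : 0 < t -> 0 < gi x t.
Proof. intros. unfold gi, Rpower. apply Rmult_lt_0_compat; apply exp_pos. Qed.

Lemma aseqS n : aseq (S n) <= / 2.
Proof. unfold aseq. rewrite S_INR. pose proof (pos_INR n). apply Rinv_le_contravar; lra. Qed.
Lemma bseqS n : 2 <= bseq (S n).
Proof. unfold bseq. rewrite S_INR. pose proof (pos_INR n). lra. Qed.

Lemma Gamma_pos x : 0 < x -> 0 < Gamma x.
Proof.
  intros Hx. pose proof (Gamma_lim x Hx) as H. apply is_lim_seq_incr_1 in H.
  assert (Hc : 0 < RI (gi x) (/2) 2).
  { apply RInt_gt_0. lra. intros; apply gi_pos; lra. intros; apply contpos_gi; lra. }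
  assert (RI (gi x) (/2) 2 <= Gamma x).
  { apply (lim_le (fun _ => RI (gi x) (/2) 2) _ _ _ (is_lim_seq_const _) H).
    intros n. apply RI_mono. apply contpos_gi. intros; left; apply gi_pos; auto.
    apply aseq_pos. apply aseqS. lra. apply bseqS. }
  lra.
Qed.

Lemma posmin a b t : 0 < a -> 0 < b -> Rmin a b <= t <= Rmax a b -> 0 < t.
Proof. intros Ha Hb [H _]. unfold Rmin in H. destruct (Rle_dec a b); lra. Qed.

Lemma RI_succ x a b : 0 < a -> 0 < b ->
  RI (gi (x + 1)) a b = x * RI (gi x) a b + (gi (x + 1) a - gi (x + 1) b).
Proof.
  intros Ha Hb.
  assert (Hd : is_RInt (fun t => gi (x + 1) t - x * gi x t) a b
                 (minus ((fun t => - gi (x + 1) t) b) ((fun t => - gi (x + 1) t) a))).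
  { apply (is_RInt_derive (V:=R_CompleteNormedModule) (fun t => - gi (x + 1) t)).
    - intros t Ht. pose proof (posmin a b t Ha Hb Ht). unfold gi, Rpower. auto_derive. lra.
      replace (x + 1 - 1) with x by ring. rewrite (exp_sm1 x t) by lra. field. lra.
    - intros t Ht. pose proof (posmin a b t Ha Hb Ht). unfold gi, Rpower.
      apply (ex_derive_continuous (K:=R_AbsRing) (V:=R_NormedModule)). auto_derive. lra. }
  assert (H1 := RInt_correct (V:=R_CompleteNormedModule) (gi (x+1)) a b (exR _ _ _ Ha Hb (contpos_gi _))).
  assert (H2 := RInt_correct (V:=R_CompleteNormedModule) (gi x) a b (exR _ _ _ Ha Hb (contpos_gi _))).
  pose proof (is_RInt_minus _ _ _ _ _ _ H1 (is_RInt_scal _ _ _ x _ H2)) as Hl.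
  assert (Hl' : is_RInt (fun t => gi (x + 1) t - x * gi x t) a b (RI (gi (x+1)) a b - x * RI (gi x) a b)) by exact Hl.
  apply (is_RInt_unique (V:=R_CompleteNormedModule)) in Hd. apply (is_RInt_unique (V:=R_CompleteNormedModule)) in Hl'. rewrite Hl' in Hd.
  unfold minus, plus, opp in Hd; simpl in Hd. lra.
Qed.

Lemma gi_a0 x : 0 < x -> is_lim_seq (fun n => gi (x + 1) (aseq n)) 0.
Proof.
  intros Hx. apply lim0. intros eps He.
  set (c := exp (ln eps / x)). assert (Hc : 0 < c) by apply exp_pos.
  exists (/ c). intros n Hn. pose proof (aseq_pos n) as Ha.
  assert (Hlt : aseq n < c).
  { unfold aseq. rewrite <- (Rinv_inv c). apply Rinv_lt_contravar.
    apply Rmult_lt_0_compat. apply Rinv_0_lt_compat; auto. pose proof (pos_INR n); lra. lra. }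
  assert (Hl : ln (aseq n) < ln eps / x). { unfold c in Hlt. rewrite <- (ln_exp (ln eps / x)). apply ln_increasing; auto. }
  assert (Hl2 : x * ln (aseq n) < ln eps).
  { apply (Rmult_lt_compat_l x) in Hl; auto. replace (x * (ln eps / x)) with (ln eps) in Hl by (field; lra). exact Hl. }
  unfold gi, Rpower. rewrite Rabs_pos_eq by (apply Rmult_le_pos; left; apply exp_pos).
  replace (x + 1 - 1) with x by ring.
  pose proof (expt_le1 (aseq n) ltac:(lra)). pose proof (exp_pos (x * ln (aseq n))).
  assert (exp (x * ln (aseq n)) < eps) by (rewrite <- (exp_ln eps) by auto; apply exp_increasing; auto).
  pose proof (exp_pos (- aseq n)). nra.
Qed.

Lemma gi_b0 x : is_lim_seq (fun n => gi (x + 1) (bseq n)) 0.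
Proof.
  apply lim0. intros eps He. pose proof (Kp_pos x) as HK.
  exists (- 2 * ln (eps / Kp x)). intros n Hn.
  assert (Hb : -2 * ln (eps / Kp x) < bseq n) by (unfold bseq; lra).
  pose proof (Kp_bound x (bseq n) (bseq_ge1 n)) as HKb.
  unfold gi, Rpower. rewrite Rabs_pos_eq by (apply Rmult_le_pos; left; apply exp_pos).
  replace (x + 1 - 1) with x by ring.
  assert (exp (- bseq n / 2) < eps / Kp x).
  { rewrite <- (exp_ln (eps / Kp x)) by (apply Rdiv_lt_0_compat; auto). apply exp_increasing. lra. }
  assert (Kp x * exp (- bseq n / 2) < eps).
  { apply (Rmult_lt_compat_l (Kp x)) in H; auto. replace (Kp x * (eps / Kp x)) with eps in H by (field; lra). exact H. }
  lra.
Qed.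

Lemma Gamma_succ x : 0 < x -> Gamma (x + 1) = x * Gamma x.
Proof.
  intros Hx.
  pose proof (Gamma_lim (x + 1) ltac:(lra)) as H1.
  assert (H2 : is_lim_seq (fun n => x * RI (gi x) (aseq n) (bseq n) + (gi (x + 1) (aseq n) - gi (x + 1) (bseq n))) (x * Gamma x + (0 - 0))).
  { apply is_lim_seq_plus'. apply (is_lim_seq_scal_l _ x (Gamma x)), Gamma_lim; auto.
    apply is_lim_seq_minus'. apply gi_a0; auto. apply gi_b0. }
  apply (is_lim_seq_ext _ (fun n => RI (gi (x + 1)) (aseq n) (bseq n))) in H2.
  - pose proof (lim_uniq _ _ _ H1 H2). lra.
  - intros n. rewrite RI_succ; auto. apply aseq_pos. pose proof (bseq_ge1 n); lra.
Qed.

Lemma RI_Eh x h a b : 0 < a -> 0 < b ->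
  RI (Eh x h) a b = RI (gi (x + h)) a b - RI (gi x) a b - h * RI (gl x) a b.
Proof.
  intros Ha Hb.
  assert (H1 := RInt_correct (V:=R_CompleteNormedModule) (gi (x+h)) a b (exR _ _ _ Ha Hb (contpos_gi _))).
  assert (H2 := RInt_correct (V:=R_CompleteNormedModule) (gi x) a b (exR _ _ _ Ha Hb (contpos_gi _))).
  assert (H3 := RInt_correct (V:=R_CompleteNormedModule) (gl x) a b (exR _ _ _ Ha Hb (contpos_gl _))).
  pose proof (is_RInt_minus _ _ _ _ _ _ (is_RInt_minus _ _ _ _ _ _ H1 H2) (is_RInt_scal _ _ _ h _ H3)) as Hl.
  assert (Hl' : is_RInt (Eh x h) a b (RI (gi (x+h)) a b - RI (gi x) a b - h * RI (gl x) a b)) by exact Hl.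
  apply (is_RInt_unique (V:=R_CompleteNormedModule)) in Hl'. exact Hl'.
Qed.

Lemma Gamma_derive x : 0 < x -> exists l, is_derive Gamma x l.
Proof.
  intros Hx. destruct (dom_gen _ _ _ (dom_gl x Hx)) as [l Hl].
  apply gen_seq in Hl; [| apply contpos_gl].
  exists l. apply is_derive_Reals. intros eps He.
  set (Cst := (64 / x ^ 2 + Kp (x + 1 + x / 4)) * (/ (x / 2) + 2)).
  assert (HC : 0 < Cst).
  { unfold Cst. pose proof (Kp_pos (x + 1 + x / 4)).
    assert (0 < 64 / x ^ 2) by (apply Rdiv_lt_0_compat; [lra| apply pow_lt; lra]).
    assert (0 < / (x / 2)) by (apply Rinv_0_lt_compat; lra).
    apply Rmult_lt_0_compat; lra. }
  assert (Hd : 0 < Rmin (x / 4) (eps / (Cst + 1))).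
  { apply Rmin_pos. lra. apply Rdiv_lt_0_compat; lra. }
  exists (mkposreal _ Hd). intros h Hh0 Hhd. simpl in Hhd.
  pose proof (Rmin_l (x / 4) (eps / (Cst + 1))). pose proof (Rmin_r (x / 4) (eps / (Cst + 1))).
  assert (Hhx : Rabs h <= x / 4) by lra.
  assert (Hxh : 0 < x + h) by (pose proof (Rle_abs (- h)); rewrite Rabs_Ropp in H1; lra).
  assert (HL : is_lim_seq (fun n => RI (Eh x h) (aseq n) (bseq n)) (Gamma (x + h) - Gamma x - h * l)).
  { apply (is_lim_seq_ext (fun n => RI (gi (x + h)) (aseq n) (bseq n) - RI (gi x) (aseq n) (bseq n) - h * RI (gl x) (aseq n) (bseq n))).
    intros n. rewrite RI_Eh; auto. apply aseq_pos. pose proof (bseq_ge1 n); lra.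
    apply is_lim_seq_minus'. apply is_lim_seq_minus'; apply Gamma_lim; auto.
    apply (is_lim_seq_scal_l _ h l); auto. }
  apply is_lim_seq_abs in HL.
  assert (Hb : Rabs (Gamma (x + h) - Gamma x - h * l) <= h ^ 2 * Cst).
  { apply (lim_le _ _ _ _ HL (is_lim_seq_const _)). intros n.
    pose proof (dom_RI_bound _ _ _ (dom_Eh x h Hx Hhx) (aseq n) (bseq n) (aseq_pos n) (aseq_le_bseq n)).
    unfold Cst. replace (h ^ 2 * ((64 / x ^ 2 + Kp (x + 1 + x / 4)) * (/ (x / 2) + 2))) with
      (h ^ 2 * (64 / x ^ 2 + Kp (x + 1 + x / 4)) * (/ (x / 2) + 2)) by ring. exact H1. }
  assert (Hah : 0 < Rabs h) by (apply Rabs_pos_lt; auto).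
  replace ((Gamma (x + h) - Gamma x) / h - l) with ((Gamma (x + h) - Gamma x - h * l) / h) by (field; auto).
  unfold Rdiv. rewrite Rabs_mult, Rabs_inv.
  assert (Hsq : h ^ 2 = Rabs h * Rabs h) by (rewrite <- Rabs_mult; simpl; rewrite Rmult_1_r; symmetry; apply Rabs_pos_eq; nra).
  apply (Rmult_le_compat_r (/ Rabs h)) in Hb; [| left; apply Rinv_0_lt_compat; auto].
  rewrite Hsq in Hb. replace (Rabs h * Rabs h * Cst * / Rabs h) with (Rabs h * Cst) in Hb by (field; lra).
  assert (Rabs h * Cst < eps / (Cst + 1) * Cst) by (apply Rmult_lt_compat_r; lra).
  assert (eps / (Cst + 1) * Cst < eps).
  { replace (eps / (Cst + 1) * Cst) with (eps - eps / (Cst + 1)) by (field; lra).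
    assert (0 < eps / (Cst + 1)) by (apply Rdiv_lt_0_compat; lra). lra. }
  lra.
Qed.

Lemma CS_fin f g k a b : 0 < a -> a < b -> contpos f -> contpos g -> contpos k ->
  (forall t, 0 < t -> 0 <= f t) -> (forall t, 0 < t -> 0 < k t) ->
  (forall t, 0 < t -> g t ^ 2 <= f t * k t) ->
  RI g a b ^ 2 <= RI f a b * RI k a b.
Proof.
  intros Ha Hab Hf Hg Hk Hf0 Hk0 Hfgk.
  assert (Hb : 0 < b) by lra.
  set (A := RI f a b). set (B := RI g a b). set (C := RI k a b).
  assert (HC : 0 < C) by (apply RInt_gt_0; auto; intros; [apply Hk0 | apply Hk]; lra).
  set (lam := B / C).
  assert (H1 := RInt_correct (V:=R_CompleteNormedModule) f a b (exR _ _ _ Ha Hb Hf)).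
  assert (H2 := RInt_correct (V:=R_CompleteNormedModule) g a b (exR _ _ _ Ha Hb Hg)).
  assert (H3 := RInt_correct (V:=R_CompleteNormedModule) k a b (exR _ _ _ Ha Hb Hk)).
  pose proof (is_RInt_plus _ _ _ _ _ _ (is_RInt_minus _ _ _ _ _ _ H1 (is_RInt_scal _ _ _ (2 * lam) _ H2)) (is_RInt_scal _ _ _ (lam ^ 2) _ H3)) as Hl.
  assert (Hl' : is_RInt (fun t => f t - 2 * lam * g t + lam ^ 2 * k t) a b (A - 2 * lam * B + lam ^ 2 * C)) by exact Hl.
  assert (Hq : 0 <= RI (fun t => f t - 2 * lam * g t + lam ^ 2 * k t) a b).
  { apply RInt_ge_0. lra. eexists; exact Hl'.
    intros t Ht. specialize (Hk0 t ltac:(lra)). specialize (Hfgk t ltac:(lra)). specialize (Hf0 t ltac:(lra)).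
    assert (Hsq : 0 <= (g t - lam * k t) ^ 2) by apply pow2_ge_0.
    assert (Hm : 0 <= k t * (f t - 2 * lam * g t + lam ^ 2 * k t)).
    { replace (k t * (f t - 2 * lam * g t + lam ^ 2 * k t)) with ((f t * k t - g t ^ 2) + (g t - lam * k t) ^ 2) by ring. lra. }
    destruct (Rle_or_lt 0 (f t - 2 * lam * g t + lam ^ 2 * k t)) as [HH|HH]; auto.
    assert (k t * (f t - 2 * lam * g t + lam ^ 2 * k t) < 0) by (apply Rmult_pos_neg; auto). lra. }
  apply (is_RInt_unique (V:=R_CompleteNormedModule)) in Hl'. rewrite Hl' in Hq.
  unfold lam in Hq. replace (A - 2 * (B / C) * B + (B / C) ^ 2 * C) with ((A * C - B ^ 2) / C) in Hq by (field; lra).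
  assert (0 <= A * C - B ^ 2).
  { apply (Rmult_le_compat_r C) in Hq; [| lra]. replace ((A * C - B ^ 2) / C * C) with (A * C - B ^ 2) in Hq by (field; lra). lra. }
  lra.
Qed.

Lemma Gamma_mid x y : 0 < x -> 0 < y -> Gamma ((x + y) / 2) ^ 2 <= Gamma x * Gamma y.
Proof.
  intros Hx Hy. set (m := (x + y) / 2).
  pose proof (Gamma_lim x Hx) as Lx. pose proof (Gamma_lim y Hy) as Ly. pose proof (Gamma_lim m ltac:(unfold m; lra)) as Lm.
  apply is_lim_seq_incr_1 in Lx. apply is_lim_seq_incr_1 in Ly. apply is_lim_seq_incr_1 in Lm.
  replace (Gamma m ^ 2) with (Gamma m * Gamma m) by ring.
  apply (lim_le _ _ _ _ (is_lim_seq_mult' _ _ _ _ Lm Lm) (is_lim_seq_mult' _ _ _ _ Lx Ly)).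
  intros n. cut (RI (gi m) (aseq (S n)) (bseq (S n)) ^ 2 <= RI (gi x) (aseq (S n)) (bseq (S n)) * RI (gi y) (aseq (S n)) (bseq (S n))).
  { simpl. rewrite Rmult_1_r. auto. }
  apply CS_fin; try apply contpos_gi.
  - apply aseq_pos.
  - pose proof (aseqS n). pose proof (bseqS n). lra.
  - intros; left; apply gi_pos; auto.
  - intros; apply gi_pos; auto.
  - intros t Ht. right. unfold gi, Rpower. rewrite <- !exp_plus, sq_exp. f_equal. unfold m. field.
Qed.

Lemma Gamma_isd x : 0 < x -> is_derive Gamma x (Derive Gamma x).
Proof.
  intros Hx. destruct (Gamma_derive x Hx) as [l Hl].
  rewrite (is_derive_unique _ _ _ Hl). exact Hl.
Qed.

Lemma digamma_succ x : 0 < x -> digamma (x + 1) = digamma x + 1 / x.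
Proof.
  intros Hx.
  assert (HA : is_derive (fun y => Gamma (y + 1)) x (Derive Gamma (x + 1))).
  { pose proof (is_derive_comp Gamma (fun y => y + 1) x (Derive Gamma (x + 1)) 1 (Gamma_isd (x+1) ltac:(lra))) as H.
    assert (Hp : is_derive (fun y => y + 1) x 1).
    { auto_derive; auto. }
    specialize (H Hp). unfold scal in H; simpl in H; unfold mult in H; simpl in H. rewrite Rmult_1_l in H. exact H. }
  assert (HB : is_derive (fun y => y * Gamma y) x (Gamma x + x * Derive Gamma x)).
  { pose proof (is_derive_mult (fun y => y) Gamma x 1 (Derive Gamma x)) as H.
    assert (Hi : is_derive (fun y : R => y) x 1) by (auto_derive; auto).
    specialize (H Hi (Gamma_isd x Hx) Rmult_comm). unfold plus, mult in H; simpl in H.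
    rewrite Rmult_1_l in H. exact H. }
  assert (HC : is_derive (fun y => Gamma (y + 1)) x (Gamma x + x * Derive Gamma x)).
  { apply (is_derive_ext_loc (fun y => y * Gamma y)); auto.
    exists (mkposreal x Hx). intros y Hy. unfold ball in Hy; simpl in Hy; unfold AbsRing_ball, abs, minus, plus, opp in Hy; simpl in Hy.
    apply Rabs_lt_between in Hy. rewrite Gamma_succ by lra. reflexivity. }
  apply is_derive_unique in HA. apply is_derive_unique in HC. rewrite HA in HC.
  unfold digamma. rewrite HC, Gamma_succ by auto. pose proof (Gamma_pos x Hx). field. lra.
Qed.

Lemma lnG_deriv z : 0 < z -> derivable_pt_lim (fun t => ln (Gamma t)) z (digamma z).
Proof.
  intros Hz. apply is_derive_Reals.
  pose proof (is_derive_comp ln Gamma z (/ Gamma z) (Derive Gamma z) (is_derive_ln _ (Gamma_pos z Hz)) (Gamma_isd z Hz)) as H.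
  unfold scal in H; simpl in H; unfold mult in H; simpl in H. unfold digamma. unfold Rdiv. exact H.
Qed.

Lemma lnG_mid u v : 0 < u -> 0 < v -> 2 * ln (Gamma ((u + v) / 2)) <= ln (Gamma u) + ln (Gamma v).
Proof.
  intros Hu Hv. pose proof (Gamma_mid u v Hu Hv). pose proof (Gamma_pos u Hu). pose proof (Gamma_pos v Hv).
  pose proof (Gamma_pos ((u+v)/2) ltac:(lra)).
  rewrite <- ln_mult by auto. replace (2 * ln (Gamma ((u + v) / 2))) with (ln (Gamma ((u + v) / 2) ^ 2)).
  - destruct H as [H|H]. left. apply ln_increasing; auto. apply pow_lt; auto. rewrite H; lra.
  - simpl. rewrite Rmult_1_r, ln_mult by auto. ring.
Qed.

Lemma D_incr x h : 0 < x -> 0 < h -> forall k : nat,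
  ln (Gamma (x + h)) - ln (Gamma x) <= ln (Gamma (x + INR k * h + h)) - ln (Gamma (x + INR k * h)).
Proof.
  intros Hx Hh k. induction k.
  - simpl. replace (x + 0 * h) with x by ring. lra.
  - rewrite S_INR. pose proof (pos_INR k).
    pose proof (lnG_mid (x + INR k * h) (x + INR k * h + h + h) ltac:(nra) ltac:(nra)).
    replace ((x + INR k * h + (x + INR k * h + h + h)) / 2) with (x + INR k * h + h) in H0 by field.
    replace (x + (INR k + 1) * h) with (x + INR k * h + h) by ring. lra.
Qed.

Lemma digamma_mono x y : 0 < x -> x <= y -> digamma x <= digamma y.
Proof.
  intros Hx Hxy. destruct (Rle_or_lt (digamma x) (digamma y)) as [H|H]; auto. exfalso.
  set (eps := (digamma x - digamma y) / 2). assert (He : 0 < eps) by (unfold eps; lra).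
  destruct (lnG_deriv x Hx eps He) as [dx Hdx].
  destruct (lnG_deriv y ltac:(lra) eps He) as [dy Hdy].
  destruct (Rle_lt_or_eq_dec x y Hxy) as [Hlt|Heq]; [| subst; lra].
  assert (Hm : 0 < Rmin dx dy) by (apply Rmin_pos; apply cond_pos).
  destruct (INR_archimed (Rmin dx dy) (y - x) Hm) as [N HN].
  set (h := (y - x) / (INR N + 1)).
  assert (HN1 : 0 < INR N + 1) by (pose proof (pos_INR N); lra).
  assert (Hh : 0 < h) by (unfold h; apply Rdiv_lt_0_compat; lra).
  assert (Hhm : h < Rmin dx dy).
  { unfold h. apply (Rmult_lt_reg_r (INR N + 1)); auto. replace ((y - x) / (INR N + 1) * (INR N + 1)) with (y - x) by (field; lra).
    pose proof (Rmin_l dx dy). nra. }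
  pose proof (Rmin_l dx dy). pose proof (Rmin_r dx dy).
  assert (Hy : x + INR (S N) * h = y) by (unfold h; rewrite S_INR; field; lra).
  pose proof (D_incr x h Hx Hh (S N)) as HD. rewrite Hy in HD.
  specialize (Hdx h ltac:(lra) ltac:(rewrite Rabs_pos_eq; lra)).
  specialize (Hdy h ltac:(lra) ltac:(rewrite Rabs_pos_eq; lra)).
  assert (Hq : (ln (Gamma (x + h)) - ln (Gamma x)) / h <= (ln (Gamma (y + h)) - ln (Gamma y)) / h).
  { unfold Rdiv. apply Rmult_le_compat_r. left; apply Rinv_0_lt_compat; auto. lra. }
  apply Rabs_lt_between in Hdx. apply Rabs_lt_between in Hdy. unfold eps in *. lra.
Qed.



Lemma sin_ge3 x : 0 <= x -> x <= 2 -> x <= PI -> x / 3 <= sin x.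
Proof.
  intros H0 H2 Hp. destruct (sin_bound x 0 H0 Hp) as [H _].
  simpl in H. unfold sin_approx, sin_term in H. simpl in H. nra.
Qed.

Lemma INR_match m : (match m with 0%nat => 1 | S _ => INR m + 1 end) = INR (S m).
Proof. reflexivity. Qed.
Lemma twon n : (n + (n + 0) = 2 * n)%nat. Proof. reflexivity. Qed.

Definition cpow (n : nat) (x : R) := cos x ^ (2 * n).
Definition Iw (n : nat) : R := RI (cpow n) 0 (PI / 2).
Definition Jw (n : nat) : R := RI (fun x => x ^ 2 * cpow n x) 0 (PI / 2).

Lemma cpowS n x : cpow (S n) x = cos x ^ 2 * cpow n x.
Proof. unfold cpow. replace (2 * S n)%nat with (2 + 2 * n)%nat by lia. rewrite pow_add. ring. Qed.

Lemma sin2' x : sin x ^ 2 = 1 - cos x ^ 2.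
Proof. pose proof (sin2 x). rewrite !Rsqr_pow2 in H. exact H. Qed.

Lemma INR2n1 n : INR (S (2 * n)) = 2 * INR n + 1.
Proof. rewrite S_INR, mult_INR. simpl. ring. Qed.

Lemma cont_cpow n x : continuous (cpow n) x.
Proof. unfold cpow. apply (ex_derive_continuous (K:=R_AbsRing) (V:=R_NormedModule)). auto_derive. easy. Qed.
Lemma cont_xcpow n x : continuous (fun x => x ^ 2 * cpow n x) x.
Proof. unfold cpow. apply (ex_derive_continuous (K:=R_AbsRing) (V:=R_NormedModule)). auto_derive. easy. Qed.

Lemma exI n : ex_RInt (cpow n) 0 (PI / 2).
Proof. apply (ex_RInt_continuous (V:=R_CompleteNormedModule)). intros; apply cont_cpow. Qed.
Lemma exJ n : ex_RInt (fun x => x ^ 2 * cpow n x) 0 (PI / 2).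
Proof. apply (ex_RInt_continuous (V:=R_CompleteNormedModule)). intros; apply cont_xcpow. Qed.

Lemma R1 n : (2 * INR n + 2) * Iw (S n) = (2 * INR n + 1) * Iw n.
Proof.
  assert (Hd : is_RInt (fun x => cos x ^ 2 * cos x ^ (2*n) - INR (S (2*n)) * sin x ^ 2 * cos x ^ (2*n)) 0 (PI/2)
     (minus ((fun x => sin x * cos x ^ (S (2*n))) (PI/2)) ((fun x => sin x * cos x ^ (S (2*n))) 0))).
  { apply (is_RInt_derive (V:=R_CompleteNormedModule) (fun x => sin x * cos x ^ (S (2*n)))).
    - intros x _. auto_derive. easy. rewrite !INR_match, twon. ring.
    - intros x _. apply (ex_derive_continuous (K:=R_AbsRing) (V:=R_NormedModule)). auto_derive. easy. }
  assert (H1 := RInt_correct _ _ _ (exI (S n))).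
  assert (H2 := RInt_correct _ _ _ (exI n)).
  pose proof (is_RInt_minus _ _ _ _ _ _ (is_RInt_scal _ _ _ (2 * INR n + 2) _ H1) (is_RInt_scal _ _ _ (2 * INR n + 1) _ H2)) as Hc.
  apply (is_RInt_ext _ (fun x => cos x ^ 2 * cos x ^ (2*n) - INR (S (2*n)) * sin x ^ 2 * cos x ^ (2*n))) in Hc.
  - apply (is_RInt_unique (V:=R_CompleteNormedModule)) in Hc. apply (is_RInt_unique (V:=R_CompleteNormedModule)) in Hd.
    rewrite Hc in Hd. unfold Iw. unfold minus, plus, opp, scal in Hd; simpl in Hd; unfold mult in Hd; simpl in Hd.
    rewrite cos_PI2, sin_0 in Hd. rewrite Rmult_0_l, Rmult_0_r in Hd. lra.
  - intros x _. rewrite !cpowS, sin2', INR2n1. unfold cpow, minus, plus, opp, scal; simpl; unfold mult; simpl. ring.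
Qed.

Lemma R2 n : 0 = Iw (S n) + 2 * (INR n + 1) ^ 2 * Jw (S n) - (INR n + 1) * (2 * INR n + 1) * Jw n.
Proof.
  set (F := fun x => x * cos x ^ (S (S (2*n))) + INR (S n) * x ^ 2 * sin x * cos x ^ (S (2*n))).
  assert (Hd : is_RInt (fun x => cos x ^ 2 * cos x ^ (2*n) + INR (S n) * x ^ 2 * cos x ^ 2 * cos x ^ (2*n)
        - INR (S n) * INR (S (2*n)) * x ^ 2 * sin x ^ 2 * cos x ^ (2*n)) 0 (PI/2) (minus (F (PI/2)) (F 0))).
  { apply (is_RInt_derive (V:=R_CompleteNormedModule) F).
    - intros x _. unfold F. auto_derive. easy. rewrite !INR_match, twon. rewrite !S_INR, mult_INR. simpl (INR 2). ring.
    - intros x _. apply (ex_derive_continuous (K:=R_AbsRing) (V:=R_NormedModule)). auto_derive. easy. }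
  assert (H1 := RInt_correct _ _ _ (exI (S n))).
  assert (H2 := RInt_correct _ _ _ (exJ (S n))).
  assert (H3 := RInt_correct _ _ _ (exJ n)).
  pose proof (is_RInt_minus _ _ _ _ _ _ (is_RInt_plus _ _ _ _ _ _ H1 (is_RInt_scal _ _ _ (2 * (INR n + 1) ^ 2) _ H2))
      (is_RInt_scal _ _ _ ((INR n + 1) * (2 * INR n + 1)) _ H3)) as Hc.
  apply (is_RInt_ext _ (fun x => cos x ^ 2 * cos x ^ (2*n) + INR (S n) * x ^ 2 * cos x ^ 2 * cos x ^ (2*n)
        - INR (S n) * INR (S (2*n)) * x ^ 2 * sin x ^ 2 * cos x ^ (2*n))) in Hc.
  - apply (is_RInt_unique (V:=R_CompleteNormedModule)) in Hc. apply (is_RInt_unique (V:=R_CompleteNormedModule)) in Hd.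
    rewrite Hc in Hd.
    assert (HF : minus (F (PI/2)) (F 0) = 0).
    { unfold F, minus, plus, opp; simpl. rewrite cos_PI2. ring. }
    rewrite HF in Hd. unfold Iw, Jw. symmetry. exact Hd.
  - intros x _. rewrite !cpowS, sin2', INR2n1, S_INR. unfold cpow, minus, plus, opp, scal; simpl; unfold mult; simpl. ring.
Qed.

Lemma PI2_pos : 0 < PI / 2.
Proof. pose proof PI_RGT_0. lra. Qed.

Lemma I_pos n : 0 < Iw n.
Proof.
  unfold Iw. apply RInt_gt_0. apply PI2_pos.
  intros x Hx. unfold cpow. apply pow_lt. apply cos_gt_0; lra.
  intros; apply cont_cpow.
Qed.

Lemma I0 : Iw 0 = PI / 2.
Proof.
  unfold Iw. rewrite (RInt_ext _ (fun _ => 1)). rewrite RInt_const. unfold scal; simpl; unfold mult; simpl. ring.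
  intros; unfold cpow; simpl; reflexivity.
Qed.

Lemma J0 : Jw 0 = PI ^ 3 / 24.
Proof.
  assert (Hd : is_RInt (fun x => x ^ 2) 0 (PI/2) (minus ((fun x => x ^ 3 / 3) (PI/2)) ((fun x => x ^ 3 / 3) 0))).
  { apply (is_RInt_derive (V:=R_CompleteNormedModule) (fun x => x ^ 3 / 3)).
    - intros x _. auto_derive. easy. field.
    - intros x _. apply (ex_derive_continuous (K:=R_AbsRing) (V:=R_NormedModule)). auto_derive. easy. }
  unfold Jw. rewrite (RInt_ext _ (fun x => x ^ 2)). rewrite (is_RInt_unique _ _ _ _ Hd).
  unfold minus, plus, opp; simpl. field.
  intros; unfold cpow; simpl; ring.
Qed.

Lemma J_bound n : Jw n <= 9 * (Iw n - Iw (S n)).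
Proof.
  assert (H1 := RInt_correct _ _ _ (exI n)).
  assert (H2 := RInt_correct _ _ _ (exI (S n))).
  pose proof (is_RInt_scal _ _ _ 9 _ (is_RInt_minus _ _ _ _ _ _ H1 H2)) as Hc.
  apply (is_RInt_unique (V:=R_CompleteNormedModule)) in Hc.
  unfold Iw. eapply Rle_trans; [| right; exact Hc]. unfold Jw. apply RInt_le. left; apply PI2_pos. apply exJ.
  apply (ex_RInt_continuous (V:=R_CompleteNormedModule)). intros z _.
  apply (continuous_scal_r 9 (fun y => minus (cpow n y) (cpow (S n) y))).
  apply (continuous_minus (cpow n) (cpow (S n))); apply cont_cpow.
  intros x Hx. unfold scal, minus, plus, opp; simpl; unfold mult; simpl.
  rewrite cpowS. pose proof PI_4.
  assert (Hs : x / 3 <= sin x) by (apply sin_ge3; lra).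
  assert (Hc0 : 0 <= cpow n x) by (unfold cpow; apply pow_le; left; apply cos_gt_0; lra).
  assert (Hx2 : x ^ 2 <= 9 * sin x ^ 2) by nra.
  rewrite sin2' in Hx2.
  assert (x ^ 2 * cpow n x <= 9 * (1 - cos x ^ 2) * cpow n x) by (apply Rmult_le_compat_r; lra).
  lra.
Qed.

Lemma tele n : Jw n / Iw n - Jw (S n) / Iw (S n) = 1 / (2 * (INR n + 1) ^ 2).
Proof.
  pose proof (R1 n) as H1. pose proof (R2 n) as H2. pose proof (I_pos n). pose proof (I_pos (S n)).
  pose proof (pos_INR n).
  assert (Hi0 : Iw n = (2 * INR n + 2) / (2 * INR n + 1) * Iw (S n)).
  { apply (Rmult_eq_reg_l (2 * INR n + 1)); [| lra]. rewrite <- H1. field. lra. }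
  assert (HJ : Jw (S n) = ((INR n + 1) * (2 * INR n + 1) * Jw n - Iw (S n)) / (2 * (INR n + 1) ^ 2)).
  { apply (Rmult_eq_reg_l (2 * (INR n + 1) ^ 2)). field_simplify. lra. nra. nra. }
  rewrite HJ, Hi0. field. repeat split; nra.
Qed.

Fixpoint Zs (N : nat) : R := match N with 0%nat => 0 | S k => Zs k + 1 / (INR k + 1) ^ 2 end.

Lemma Zrel N : Zs N = 2 * (Jw 0 / Iw 0 - Jw N / Iw N).
Proof.
  induction N. simpl. ring.
  change (Zs (S N)) with (Zs N + 1 / (INR N + 1) ^ 2). rewrite IHN. pose proof (tele N). 
  assert (1 / (INR N + 1) ^ 2 = 2 * (1 / (2 * (INR N + 1) ^ 2))) by (field; pose proof (pos_INR N); lra).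
  lra.
Qed.

Lemma basel N : PI ^ 2 / 6 <= Zs N + 9 / (INR N + 1).
Proof.
  rewrite Zrel, I0, J0. pose proof PI_RGT_0. pose proof (I_pos N). pose proof (J_bound N). pose proof (R1 N). pose proof (pos_INR N).
  replace (PI ^ 3 / 24 / (PI / 2)) with (PI ^ 2 / 12) by (field; lra).
  assert (HI : Iw (S N) = (2 * INR N + 1) / (2 * INR N + 2) * Iw N).
  { apply (Rmult_eq_reg_l (2 * INR N + 2)); [| lra]. rewrite H2. field. lra. }
  rewrite HI in H1.
  assert (Jw N / Iw N <= 9 / (2 * INR N + 2)).
  { apply (Rmult_le_reg_r (Iw N)); auto. replace (Jw N / Iw N * Iw N) with (Jw N) by (field; lra).
    replace (9 / (2 * INR N + 2) * Iw N) with (9 * (Iw N - (2 * INR N + 1) / (2 * INR N + 2) * Iw N)) by (field; lra). exact H1. }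
  replace (9 / (INR N + 1)) with (2 * (9 / (2 * INR N + 2))) by (field; lra). lra.
Qed.

Section Fin.
Variable a : R.
Hypothesis ha0 : 0 < a.
Hypothesis ha1 : a < 1.

Fixpoint Sa (N : nat) : R := match N with 0%nat => 0 | S k => Sa k + a / ((INR k + 1) * (INR k + 1 + a)) end.

Definition u (k : nat) := digamma (INR k + 1 + a) - digamma (INR k + 1).

Lemma u_rec k : u k = u (S k) + a / ((INR k + 1) * (INR k + 1 + a)).
Proof.
  unfold u. rewrite S_INR. pose proof (pos_INR k).
  replace (INR k + 1 + 1 + a) with ((INR k + 1 + a) + 1) by ring.
  rewrite (digamma_succ (INR k + 1 + a)), (digamma_succ (INR k + 1)) by lra. field. repeat split; lra.
Qed.

Lemma u0 N : u 0 = u N + Sa N.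
Proof.
  induction N. simpl. ring.
  rewrite IHN, (u_rec N). simpl Sa. ring.
Qed.

Lemma u_bound N : 0 <= u N <= 1 / (INR N + 1).
Proof.
  unfold u. pose proof (pos_INR N). split.
  - pose proof (digamma_mono (INR N + 1) (INR N + 1 + a) ltac:(lra) ltac:(lra)). lra.
  - pose proof (digamma_mono (INR N + 1 + a) (INR N + 1 + 1) ltac:(lra) ltac:(lra)).
    rewrite digamma_succ in H0 by lra. lra.
Qed.

Lemma Sa_up N : a / (1 + a) + a * (1 / 2 - 1 / (INR N + 2)) <= Sa (S N).
Proof.
  induction N.
  - simpl. replace (0 + 1) with 1 by ring. replace (0 + 2) with 2 by ring.
    replace (a / (1 * (1 + a))) with (a / (1 + a)) by (field; lra). lra.
  - change (Sa (S (S N))) with (Sa (S N) + a / ((INR (S N) + 1) * (INR (S N) + 1 + a))).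
    rewrite S_INR in *. pose proof (pos_INR N).
    assert (a / ((INR N + 1 + 1) * (INR N + 1 + 1 + a)) >= a / (INR N + 2) - a / (INR N + 1 + 2)).
    { replace (a / (INR N + 2) - a / (INR N + 1 + 2)) with (a / ((INR N + 2) * (INR N + 3))) by (field; lra).
      unfold Rdiv. apply Rle_ge, Rmult_le_compat_l. lra. apply Rinv_le_contravar. nra.
      replace (INR N + 1 + 1) with (INR N + 2) by ring. apply Rmult_le_compat_l; lra. }
    assert (a * (1 / 2 - 1 / (INR N + 1 + 2)) = a * (1 / 2 - 1 / (INR N + 2)) + (a / (INR N + 2) - a / (INR N + 1 + 2))) by (field; lra).
    lra.
Qed.

Definition m := (1 - a) ^ 2 / (4 * (1 + a)).

Lemma step_ineq k : 1 <= k -> a / (k * (k + a)) + (1 - a) / (k + 1) ^ 2 <= 1 / k - 1 / (k + 1).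
Proof.
  intros Hk.
  assert (E : 1 / k - 1 / (k + 1) - a / (k * (k + a)) = (1 - a) / ((k + 1) * (k + a))) by (field; lra).
  assert ((1 - a) / (k + 1) ^ 2 <= (1 - a) / ((k + 1) * (k + a))).
  { unfold Rdiv. apply Rmult_le_compat_l. lra. apply Rinv_le_contravar. nra.
    simpl. rewrite Rmult_1_r. apply Rmult_le_compat_l; lra. }
  lra.
Qed.

Lemma Sa_low N : Sa (S N) + (1 - a) * (Zs (S (S N)) - 1) <= 1 - 1 / (INR N + 2) - m.
Proof.
  induction N.
  - simpl. unfold m. replace (0 + 2) with 2 by ring.
    assert (a / ((0 + 1) * (0 + 1 + a)) + (1 - a) * (0 + 1 / (0 + 1) ^ 2 + 1 / (1 + 1) ^ 2 - 1) = 1 - 1 / 2 - (1 - a) ^ 2 / (4 * (1 + a))) by (field; lra).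
    lra.
  - change (Sa (S (S N))) with (Sa (S N) + a / ((INR (S N) + 1) * (INR (S N) + 1 + a))).
    change (Zs (S (S (S N)))) with (Zs (S (S N)) + 1 / (INR (S (S N)) + 1) ^ 2).
    rewrite !S_INR in *. pose proof (pos_INR N).
    pose proof (step_ineq (INR N + 1 + 1) ltac:(lra)).
    replace (INR N + 1 + 1 + 1) with (INR N + 1 + 2) in H0 by ring.
    replace (INR N + 1 + 1) with (INR N + 2) in H0 by ring.
    replace (INR N + 1 + 1) with (INR N + 2) by ring.
    replace (INR N + 1 + 1 + 1) with (INR N + 1 + 2) by ring.
    assert ((1 - a) * (1 / (INR N + 2 + 1) ^ 2) = (1 - a) / (INR N + 1 + 2) ^ 2) by (field; lra). lra.
Qed.

End Fin.

Theorem lemma5p3 (a : R) (ha0 : 0 < a) (ha1 : a < 1) :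
  (1 - a) * (1 / a + PI ^ 2 / 6 - 1) < digamma 1 - digamma a /\
  digamma 1 - digamma a < (1 - a) * (1 / a + 1).
Proof.
  assert (Hs : digamma (a + 1) = digamma a + 1 / a) by (apply digamma_succ; lra).
  destruct (INR_archimed 1 (72 / (1 - a)) Rlt_0_1) as [N HN]. rewrite Rmult_1_r in HN.
  pose proof (pos_INR N) as HN0.
  pose proof (u0 a ha0 ha1 (S N)) as H0.
  pose proof (u_bound a ha0 ha1 (S N)) as HB.
  pose proof (Sa_up a ha0 ha1 N) as HU.
  pose proof (Sa_low a ha0 ha1 N) as HL.
  pose proof (basel (S (S N))) as HP.
  unfold u in H0, HB. rewrite !S_INR in HB. rewrite !S_INR in HP. rewrite S_INR in H0.
  replace (INR 0 + 1 + a) with (a + 1) in H0 by (simpl; ring).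
  replace (INR 0 + 1) with 1 in H0 by (simpl; ring).
  replace (INR N + 1 + 1) with (INR N + 2) in H0, HB by ring.
  replace (INR N + 1 + 1 + 1) with (INR N + 2 + 1) in HP by ring.
  set (K := INR N + 2) in *.
  set (T := digamma (a + 1) - digamma 1) in *.
  set (Z2 := Zs (S (S N))) in *.
  set (v := digamma (K + a) - digamma K) in *.
  assert (HK : 72 / (1 - a) < K) by (unfold K; lra).
  assert (HK0 : 0 < K) by (unfold K; lra).
  assert (Hinv : 1 / K < (1 - a) / (36 * (1 + a))).
  { assert (Hc : 36 * (1 + a) / (1 - a) < K).
    { eapply Rle_lt_trans; [| exact HK]. unfold Rdiv. apply Rmult_le_compat_r. left; apply Rinv_0_lt_compat; lra. lra. }
    replace ((1 - a) / (36 * (1 + a))) with (/ (36 * (1 + a) / (1 - a))) by (field; lra).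
    unfold Rdiv at 1. rewrite Rmult_1_l. apply Rinv_lt_contravar; auto.
    apply Rmult_lt_0_compat; auto. apply Rdiv_lt_0_compat; lra. }
  assert (Hpsi : digamma 1 - digamma a = 1 / a - T) by (unfold T; rewrite Hs; ring).
  rewrite Hpsi. split.
  -
    assert (H9 : 9 / (K + 1) <= 9 / K).
    { unfold Rdiv. apply Rmult_le_compat_l. lra. apply Rinv_le_contravar; lra. }
    assert (HPa : (1 - a) * (PI ^ 2 / 6) <= (1 - a) * (Z2 + 9 / K)) by (apply Rmult_le_compat_l; lra).
    assert (E1 : 9 / K = 9 * (1 / K)) by (field; lra).
    assert (E2 : (1 - a) * (9 * (1 / K)) < (1 - a) * (9 * ((1 - a) / (36 * (1 + a))))) by (apply Rmult_lt_compat_l; lra).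
    assert (E3 : (1 - a) * (9 * ((1 - a) / (36 * (1 + a)))) = m a) by (unfold m; field; lra).
    assert (E4 : (1 - a) * (1 / a + PI ^ 2 / 6 - 1) = 1 / a - 1 + (1 - a) * (PI ^ 2 / 6) - (1 - a)) by (field; lra).
    rewrite E4. rewrite E1 in HPa.
    assert (E5 : (1 - a) * (Z2 + 9 * (1 / K)) = (1 - a) * Z2 + (1 - a) * (9 * (1 / K))) by ring.
    assert (E6 : (1 - a) * (Z2 - 1) = (1 - a) * Z2 - (1 - a)) by ring.
    lra.
  -
    assert (E1 : (1 - a) * (1 / a + 1) = 1 / a - a) by (field; lra).
    rewrite E1.
    assert (Hq : 1 / K < (1 - a) / (2 * (1 + a))).
    { eapply Rlt_le_trans; [exact Hinv|]. unfold Rdiv. apply Rmult_le_compat_l. lra. apply Rinv_le_contravar; lra. }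
    assert (E2 : a / (1 + a) - a / 2 = a * ((1 - a) / (2 * (1 + a)))) by (field; lra).
    assert (E3 : a * (1 / K) < a * ((1 - a) / (2 * (1 + a)))) by (apply Rmult_lt_compat_l; lra).
    assert (E4 : a * (1 / 2 - 1 / K) = a / 2 - a * (1 / K)) by (field; lra).
    lra.
Qed.
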